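(* Let $T$ be a rooted edge-weighted full binary tree with $n$ leaves, all root-to-leaf paths of weight $1$, every edge of weight at least $\tau\frac{\log n}{\sqrt{n}}$ for a sufficiently large constant $\tau$, whose topology is known, with experiment outcomes on all triples of leaves generated by the homogeneous noise model. Let $\mathsf{lc}_r$ be the left child of the root $r$. Then there is a procedure (Compute-light-tree) which, with high probability, computes $h_v$ for all vertices $v$ in the subtree rooted at $\mathsf{lc}_r$, each with additive error $\Theta(\sqrt{\log n/n})$.
   Context: Distances $d$ between leaves are path weights (an ultrametric). For each unordered triple of distinct leaves a single experiment $Q(a,b,c)$ returns one pair, independently across triples, with $\Pr[Q(a,b,c)=(a,b)]=\frac{d(a,c)+d(b,c)}{2(d(a,b)+d(b,c)+d(a,c))}$ (and symmetrically). For a vertex $v$, $h_v$ is the total weight of a path from $v$ to any leaf in its subtree, and $\mathsf{NL}(v)$ is the number of leaves in the subtree rooted at $v$. The children of every internal vertex are ordered as left child $\mathsf{lc}$ and right child $\mathsf{rc}$ with $\mathsf{NL}(\mathsf{rc})\ge\mathsf{NL}(\mathsf{lc})$. ''With high probability'' means probability $1-o(1)$ as $n\to\infty$. *)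

(* Defs.v *)
From HB Require Import structures.
From mathcomp Require Import all_boot all_order all_algebra.
From mathcomp Require Import reals exp.
Set Implicit Arguments. Unset Strict Implicit. Unset Printing Implicit Defensive.
Import Order.TTheory GRing.Theory Num.Theory.
Local Open Scope ring_scope.

Section Trees.
Variables (R : realType) (n : nat).

(* Rooted edge-weighted full binary tree with leaves labelled by 'I_n.
   WNode w1 w2 t1 t2 : internal vertex with left child t1 (edge weight w1)
   and right child t2 (edge weight w2). *)
Inductive wtree : Type :=
  | WLeaf of 'I_n
  | WNode of R & R & wtree & wtree.

Inductive btree : Type :=
  | BLeaf of 'I_n
  | BNode of btree & btree.

Fixpoint topology (t : wtree) : btree :=
  match t with
  | WLeaf a => BLeaf a
  | WNode _ _ t1 t2 => BNode (topology t1) (topology t2)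
  end.

Fixpoint leaves (t : wtree) : seq 'I_n :=
  match t with
  | WLeaf a => [:: a]
  | WNode _ _ t1 t2 => leaves t1 ++ leaves t2
  end.

Definition NL (t : wtree) : nat := size (leaves t).

Fixpoint ordered_children (t : wtree) : bool :=
  match t with
  | WLeaf _ => true
  | WNode _ _ t1 t2 => [&& NL t1 <= NL t2, ordered_children t1 & ordered_children t2]%N
  end.

Fixpoint edge_weights (t : wtree) : seq R :=
  match t with
  | WLeaf _ => [::]
  | WNode w1 w2 t1 t2 => w1 :: w2 :: edge_weights t1 ++ edge_weights t2
  end.

Fixpoint path_weights (t : wtree) : seq R :=
  match t with
  | WLeaf _ => [:: 0]
  | WNode w1 w2 t1 t2 =>
      map (fun x => w1 + x) (path_weights t1) ++ map (fun x => w2 + x) (path_weights t2)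
  end.

(* h_v: total weight of a path from v to a leaf of its subtree (the first
   one; under the ultrametric hypothesis all such paths have equal weight). *)
Definition hv (t : wtree) : R := head 0 (path_weights t).

(* vertex addressed by a left(false)/right(true) path from the root *)
Fixpoint subtree_at (t : wtree) (s : seq bool) : option wtree :=
  match s, t with
  | [::], _ => Some t
  | b :: s', WNode _ _ t1 t2 => subtree_at (if b then t2 else t1) s'
  | _ :: _, WLeaf _ => None
  end.

Fixpoint vertices (t : wtree) : seq (seq bool) :=
  match t with
  | WLeaf _ => [:: [::]]
  | WNode _ _ t1 t2 =>
      [::] :: map (cons false) (vertices t1) ++ map (cons true) (vertices t2)
  end.

(* addresses of the vertices of the subtree rooted at lc_r (the left child
   of the root); empty if the root is a leaf *)
Definition lc_vertices (t : wtree) : seq (seq bool) :=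
  match t with
  | WLeaf _ => [::]
  | WNode _ _ t1 _ => map (cons false) (vertices t1)
  end.

(* weight of the path from the root of t to leaf a (0 if a is not a leaf of t) *)
Fixpoint leaf_depth (t : wtree) (a : 'I_n) : R :=
  match t with
  | WLeaf _ => 0
  | WNode w1 w2 t1 t2 =>
      if a \in leaves t1 then w1 + leaf_depth t1 a
      else if a \in leaves t2 then w2 + leaf_depth t2 a else 0
  end.

Fixpoint dist (t : wtree) (a b : 'I_n) : R :=
  if a == b then 0 else
  match t with
  | WLeaf _ => 0
  | WNode w1 w2 t1 t2 =>
      if (a \in leaves t1) && (b \in leaves t1) then dist t1 a b
      else if (a \in leaves t2) && (b \in leaves t2) then dist t2 a b
      else leaf_depth t a + leaf_depth t b
  end.

(* unordered triples of distinct leaves, represented as a < b < c *)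
Definition triple : Type :=
  {t : 'I_n * 'I_n * 'I_n | (t.1.1 < t.1.2)%N && (t.1.2 < t.2)%N}.

(* An outcome of Q(a,b,c) is encoded by k : 'I_3, the element NOT in the
   returned pair: k = 0 -> (b,c), k = 1 -> (a,c), k = 2 -> (a,b). *)
Definition outcomes : Type := {ffun triple -> 'I_3}.

(* Pr[Q(a,b,c) = pair excluding k] in the homogeneous noise model *)
Definition qprob (t : wtree) (tr : triple) (k : 'I_3) : R :=
  let a := (val tr).1.1 in let b := (val tr).1.2 in let c := (val tr).2 in
  let S := dist t a b + dist t b c + dist t a c in
  match val k with
  | 0%N => (dist t b a + dist t c a) / (2 * S)
  | 1%N => (dist t a b + dist t c b) / (2 * S)
  | _   => (dist t a c + dist t b c) / (2 * S)
  end.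

(* independent experiments on all triples: product distribution *)
Definition outcome_prob (t : wtree) (f : outcomes) : R :=
  \prod_(tr : triple) qprob t tr (f tr).

Definition Pr (t : wtree) (E : pred outcomes) : R :=
  \sum_(f : outcomes | E f) outcome_prob t f.

Definition valid_tree (tau : R) (t : wtree) : Prop :=
  [/\ perm_eq (leaves t) (enum 'I_n),
      ordered_children t,
      all (fun x => x == 1) (path_weights t)
    & all (fun w => tau * ln (n%:R) / Num.sqrt (n%:R) <= w) (edge_weights t)].

End Trees.

Arguments WLeaf {R n}.
Arguments BLeaf {n}.

(* Main.v *)
Require Import Defs.
From HB Require Import structures.
From mathcomp Require Import all_boot all_order all_algebra.
From mathcomp Require Import reals exp sequences.
From mathcomp Require Import ring lra zify.
Import Order.TTheory GRing.Theory Num.Theory.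
Local Open Scope ring_scope.
Lemma sum_le_or (R : realType) (T : finType) (P P1 P2 : pred T) (w : T -> R) :
  (forall x, 0 <= w x) -> (forall x, P x -> P1 x || P2 x) ->
  \sum_(x | P x) w x <= \sum_(x | P1 x) w x + \sum_(x | P2 x) w x.
Proof.
move=> w0 hP; rewrite (big_mkcond P) (big_mkcond P1) (big_mkcond P2) -big_split /=.
apply: ler_sum => x _; have := hP x; have := w0 x.
by case: (P x); case: (P1 x); case: (P2 x) => //= h0 H; (try by have := H isT); lra.
Qed.

Lemma sum_le_sub (R : realType) (T : finType) (P P1 : pred T) (w : T -> R) :
  (forall x, 0 <= w x) -> (forall x, P x -> P1 x) ->
  \sum_(x | P x) w x <= \sum_(x | P1 x) w x.
Proof.
move=> w0 hP; rewrite (big_mkcond P) (big_mkcond P1) /=.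
apply: ler_sum => x _; have := hP x; have := w0 x.
by case: (P x); case: (P1 x) => //= h0 H; (try by have := H isT); lra.
Qed.

Section Chernoff.
Variables (R : realType) (I J : finType) (q : I -> J -> R).
Hypothesis q_ge0 : forall i j, 0 <= q i j.
Hypothesis q_sum1 : forall i, \sum_j q i j = 1.

Definition wt (f : {ffun I -> J}) : R := \prod_i q i (f i).

Lemma wt_ge0 f : 0 <= wt f.
Proof. by apply: prodr_ge0 => i _; apply: q_ge0. Qed.

Lemma factorize (G : I -> J -> R) :
  \sum_f wt f * \prod_i G i (f i) = \prod_i \sum_j q i j * G i j.
Proof.
rewrite (bigA_distr_bigA (fun i j => q i j * G i j)).
by apply: eq_bigr => f _; rewrite /wt -big_split.
Qed.

Lemma sum_wt : \sum_f wt f = 1.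
Proof.
have -> : \sum_f wt f = \sum_f wt f * \prod_(i : I) (fun _ _ => (1:R)) i (f i).
  by apply: eq_bigr => f _; rewrite big1_eq mulr1.
rewrite (factorize (fun _ _ => 1)); apply: big1 => i _.
by under eq_bigr do rewrite mulr1; apply: q_sum1.
Qed.

Lemma expR_up (x : R) : x <= 2^-1 -> expR x <= 1 + x + 2 * x ^+ 2.
Proof.
move=> hx.
have h1 : 1 - x <= expR (- x) by have := expR_ge1Dx (- x).
have hpos : 0 < 1 - x by lra.
rewrite -[expR x]invrK -expRN.
have -> : 1 + x + 2 * x ^+ 2 = ((1 + x + 2 * x ^+ 2)^-1)^-1 by rewrite invrK.
have hp2 : 0 < 1 + x + 2 * x ^+ 2 by nra.
rewrite lef_pV2 ?posrE ?expR_gt0 ?invr_gt0 //.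
apply: le_trans h1.
rewrite -(@ler_pM2r _ (1 + x + 2 * x ^+ 2)) // mulVf ?gt_eqF //.
nra.
Qed.


Lemma chernoff1 (A : {set I}) (X : I -> J -> bool) (p t : R) :
  (forall i, i \in A -> \sum_j q i j * (X i j)%:R = p) ->
  0 <= t -> t <= 2 ->
  \sum_(f : {ffun I -> J} | #|A|%:R * t <= \sum_(i in A) ((X i (f i))%:R - p)) wt f
    <= expR (- (#|A|%:R * t ^+ 2 / 8)).
Proof.
move=> hp t0 t2.
set m : R := #|A|%:R.
set l : R := t / 4.
pose Y i j : R := (X i j)%:R - p.
pose G i j := if i \in A then expR (l * Y i j) else 1.
have step1 : \sum_(f : {ffun I -> J} | m * t <= \sum_(i in A) Y i (f i)) wt f <=
    \sum_f wt f * (expR (- (l * m * t)) * \prod_i G i (f i)).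
  rewrite big_mkcond /=; apply: ler_sum => f _; case: ifP => hf; last first.
    by rewrite mulr_ge0 ?wt_ge0 // mulr_ge0 ?expR_ge0 //;
       apply: prodr_ge0 => i _; rewrite /G; case: ifP => _ //; exact: expR_ge0.
  rewrite -[X in X <= _]mulr1 ler_wpM2l ?wt_ge0 //.
  have -> : \prod_i G i (f i) = \prod_(i in A) expR (l * Y i (f i)).
    by rewrite [RHS]big_mkcond /=; apply: eq_bigr => i _; rewrite /G; case: ifP.
  rewrite -expR_sum -expRD.
  apply: le_trans (expR_ge1Dx _); rewrite lerDl -mulr_sumr.
  have hl : 0 <= l by rewrite /l; lra.
  move: hf; set S := \sum_(i in A) _ => hf; nra.
apply: le_trans step1 _.
under eq_bigr do rewrite mulrCA.
rewrite -mulr_sumr factorize.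
have hp01 : forall i, i \in A -> 0 <= p <= 1.
  move=> i iA; rewrite -(hp i iA); apply/andP; split.
    by apply: sumr_ge0 => j _; rewrite mulr_ge0.
  rewrite -[X in _ <= X](q_sum1 i).
  by apply: ler_sum => j _; rewrite ler_piMr // lern1 leq_b1.
have fac : forall i, 0 <= \sum_j q i j * G i j <= (if i \in A then expR (2 * l ^+ 2) else 1).
  move=> i; rewrite /G; case: ifP => iA; last first.
    by under eq_bigr do rewrite mulr1; rewrite q_sum1 ler01 lexx.
  apply/andP; split.
    by apply: sumr_ge0 => j _; rewrite mulr_ge0 ?expR_ge0.
  have [p0 p1] := andP (hp01 i iA).
  have hY : forall j, -1 <= Y i j <= 1.
    move=> j; rewrite /Y; case: (X i j) => /=; lra.
  apply: (@le_trans _ _ (\sum_j q i j * (1 + l * Y i j + 2 * l ^+ 2))).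
    apply: ler_sum => j _; apply: ler_wpM2l => //.
    have [y0 y1] := andP (hY j).
    apply: le_trans (expR_up _ _) _.
      rewrite /l; nra.
    rewrite lerD2l ler_wpM2l // exprMn ler_piMr ?sqr_ge0 //; nra.
  apply: le_trans (expR_ge1Dx _).
  under eq_bigr do rewrite mulrDr mulrDr.
  rewrite !big_split /=.
  have -> : \sum_i0 q i i0 * 1 = 1 by under eq_bigr do rewrite mulr1; apply: q_sum1.
  have -> : \sum_i0 q i i0 * (2 * l ^+ 2) = 2 * l ^+ 2.
    by rewrite -mulr_suml q_sum1 mul1r.
  have -> : \sum_i0 q i i0 * (l * Y i i0) = 0.
    rewrite (eq_bigr (fun j => l * (q i j * (X i j)%:R) - l * p * q i j)).
      by rewrite sumrB -!mulr_sumr hp // q_sum1; ring.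
    by move=> j _; rewrite /Y; ring.
  lra.
apply: (@le_trans _ _ (expR (- (l * m * t)) * expR (2 * l ^+ 2) ^+ #|A|)).
  rewrite ler_wpM2l ?expR_ge0 //.
  rewrite -prodr_const [X in _ <= X]big_mkcond /=.
  by apply: ler_prod => i _; have := fac i; case: (i \in A).
rewrite -expRM_natl -expRD ler_expR /m /l; lra.
Qed.


Lemma chernoff2 (A : {set I}) (X : I -> J -> bool) (p t : R) :
  (forall i, i \in A -> \sum_j q i j * (X i j)%:R = p) ->
  0 <= t -> t <= 2 ->
  \sum_(f : {ffun I -> J} | #|A|%:R * t <= `| \sum_(i in A) (X i (f i))%:R - #|A|%:R * p |) wt f
    <= 2 * expR (- (#|A|%:R * t ^+ 2 / 8)).
Proof.
move=> hp t0 t2.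
have h1 := @chernoff1 A X p t hp t0 t2.
have hp' : forall i, i \in A -> \sum_j q i j * (~~ X i j)%:R = 1 - p.
  move=> i iA; rewrite -(hp i iA) -[X in X - _](q_sum1 i) -sumrB.
  by apply: eq_bigr => j _; case: (X i j) => /=; ring.
have h2 := @chernoff1 A (fun i j => ~~ X i j) (1 - p) t hp' t0 t2.
rewrite mulr2n mulrDl mul1r.
apply: le_trans (lerD h1 h2).
apply: sum_le_or => [f|f]; first exact: wt_ge0.
have e1 : \sum_(i in A) ((X i (f i))%:R - p) = \sum_(i in A) (X i (f i))%:R - #|A|%:R * p.
  by rewrite sumrB sumr_const mulr_natl.
have e2 : \sum_(i in A) ((~~ X i (f i))%:R - (1 - p)) = - (\sum_(i in A) (X i (f i))%:R - #|A|%:R * p).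
  rewrite -e1 -sumrN; apply: eq_bigr => i _; case: (X i (f i)) => /=; ring.
rewrite e1 e2; set D := (_ - _) => hD.
have [hD0|hD0] := lerP 0 D.
  by rewrite (ger0_norm hD0) in hD; rewrite hD.
by rewrite (ltr0_norm hD0) in hD; rewrite hD orbT.
Qed.

End Chernoff.

Section TreeL.
Variables (R : realType) (n : nat).
Set Implicit Arguments. Unset Strict Implicit.
Implicit Types (t u : wtree R n) (a b : 'I_n).

Fixpoint bleaves (t : btree n) : seq 'I_n :=
  match t with BLeaf a => [:: a] | BNode t1 t2 => bleaves t1 ++ bleaves t2 end.

Fixpoint bsub (t : btree n) (s : seq bool) : option (btree n) :=
  match s, t with
  | [::], _ => Some t
  | b :: s', BNode t1 t2 => bsub (if b then t2 else t1) s'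
  | _ :: _, BLeaf _ => None
  end.

Lemma bleaves_top t : bleaves (topology t) = leaves t.
Proof. by elim: t => //= w1 w2 t1 -> t2 ->. Qed.

Lemma bsub_top t s : bsub (topology t) s = omap (@topology R n) (subtree_at t s).
Proof. by elim: s t => [|b s IH] [a|w1 w2 t1 t2] //=; case: b. Qed.

Lemma leaves_nil t : leaves t != [::].
Proof. by elim: t => //= w1 w2 t1; case: (leaves t1). Qed.

Lemma uniq_notin2 (s1 s2 : seq 'I_n) a : uniq (s1 ++ s2) -> a \in s2 -> a \notin s1.
Proof.
rewrite cat_uniq => /and3P [_ /hasPn H _] a2; exact: H.
Qed.

Lemma uniq_notin1 (s1 s2 : seq 'I_n) a : uniq (s1 ++ s2) -> a \in s1 -> a \notin s2.
Proof.
move=> u a1; apply/negP => a2; by move: (uniq_notin2 u a2); rewrite a1.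
Qed.

Lemma sub_leaves t s u : subtree_at t s = Some u ->
  {subset leaves u <= leaves t} /\ (uniq (leaves t) -> uniq (leaves u)).
Proof.
elim: s t => [|b s IH] [a|w1 w2 t1 t2] //=; first by case=> <-; split.
  by case=> <-; split.
case: b => h; have [h1 h2] := IH _ h; split.
- by move=> x /h1 xt; rewrite mem_cat xt orbT.
- by rewrite cat_uniq => /and3P [_ _ /h2].
- by move=> x /h1 xt; rewrite mem_cat xt.
- by rewrite cat_uniq => /and3P [/h2].
Qed.

Lemma dist_aa t a : dist t a a = 0.
Proof. by case: t => [x|w1 w2 t1 t2] /=; rewrite eqxx. Qed.

Lemma dist_sym t a b : dist t a b = dist t b a.
Proof.
elim: t => [x|w1 w2 t1 IH1 t2 IH2] /=; rewrite eq_sym; case: eqP => //= _.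
rewrite IH1 IH2.
by case: (a \in leaves t1); case: (b \in leaves t1); case: (a \in leaves t2);
  case: (b \in leaves t2) => //=; rewrite addrC.
Qed.

Lemma all_shift (s : seq R) w h :
  all (fun x => w + x == h) s -> all (fun x => x == h - w) s.
Proof. by apply: sub_all => x /eqP <-; apply/eqP; ring. Qed.

Lemma ld_const t h a : all (fun x => x == h) (path_weights t) ->
  a \in leaves t -> leaf_depth t a = h.
Proof.
elim: t h => [x|w1 w2 t1 IH1 t2 IH2] h /=.
  by rewrite andbT => /eqP <-.
rewrite all_cat !all_map => /andP [/all_shift h1 /all_shift h2].
rewrite mem_cat; case: ifP => a1 /=.
  by rewrite (IH1 _ h1 a1) => _; ring.
by move=> a2; rewrite a2 (IH2 _ h2 a2); ring.
Qed.

Lemma pw_nil t : path_weights t != [::].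
Proof.
by elim: t => //= w1 w2 t1; case: (path_weights t1).
Qed.

Lemma hv_mem t : hv t \in path_weights t.
Proof. by rewrite /hv; have := pw_nil t; case: (path_weights t) => //= x s _; rewrite mem_head. Qed.

Lemma const_hv t h : all (fun x => x == h) (path_weights t) -> hv t = h.
Proof. by move=> /allP H; apply/eqP; apply: H; apply: hv_mem. Qed.

Lemma sub_const t s u h : subtree_at t s = Some u ->
  all (fun x => x == h) (path_weights t) -> all (fun x => x == hv u) (path_weights u).
Proof.
elim: s t h => [|b s IH] t h; first by case: t => [a|w1 w2 t1 t2] [<-] H; rewrite (const_hv H).
case: t => [a|w1 w2 t1 t2] //=.
rewrite all_cat !all_map => hs /andP [/all_shift h1 /all_shift h2].
by case: b hs => hs; [apply: IH hs h2 | apply: IH hs h1].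
Qed.

Lemma sub_ew (P : pred R) t s u : subtree_at t s = Some u ->
  all P (edge_weights t) -> all P (edge_weights u).
Proof.
elim: s t => [|b s IH] t; first by case: t => [a|w1 w2 t1 t2] /= [<-].
case: t => [a|w1 w2 t1 t2] //=.
move=> hs /and3P [_ _]; rewrite all_cat => /andP [e1 e2].
by case: b hs => hs; [apply: IH hs e2 | apply: IH hs e1].
Qed.

Lemma pw_ge0 t : all (fun w => 0 <= w) (edge_weights t) ->
  all (fun x => 0 <= x) (path_weights t).
Proof.
elim: t => [x|w1 w2 t1 IH1 t2 IH2] /=; first by rewrite lexx.
move=> /and3P [w1p w2p]; rewrite all_cat => /andP [/IH1 e1 /IH2 e2].
rewrite all_cat !all_map; apply/andP; split.
  by apply: sub_all e1 => x /= x0; rewrite addr_ge0.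
by apply: sub_all e2 => x /= x0; rewrite addr_ge0.
Qed.

Lemma hv_bounds t s u h : all (fun w => 0 <= w) (edge_weights t) ->
  all (fun x => x == h) (path_weights t) -> subtree_at t s = Some u ->
  0 <= hv u <= h.
Proof.
move=> e0 c0 hs; apply/andP; split.
  have := pw_ge0 (sub_ew hs e0) => /allP; apply; apply: hv_mem.
elim: s t h e0 c0 hs => [|b s IH] t h; first by case: t => [a|w1 w2 t1 t2] _ H [<-]; rewrite (const_hv H).
case: t => [a|w1 w2 t1 t2] //=.
move=> /and3P [w1p w2p]; rewrite all_cat => /andP [e1 e2].
rewrite all_cat !all_map => /andP [/all_shift h1 /all_shift h2].
case: b => hs.
  by have := IH _ _ e2 h2 hs; lra.
by have := IH _ _ e1 h1 hs; lra.
Qed.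

Lemma ld_ge0 t a : all (fun w => 0 <= w) (edge_weights t) -> 0 <= leaf_depth t a.
Proof.
elim: t => [x|w1 w2 t1 IH1 t2 IH2] /=; first by rewrite lexx.
move=> /and3P [w1p w2p]; rewrite all_cat => /andP [/IH1 e1 /IH2 e2].
by case: ifP => _; [|case: ifP => _]; rewrite ?addr_ge0.
Qed.

Lemma dist_ge0 t a b : all (fun w => 0 <= w) (edge_weights t) -> 0 <= dist t a b.
Proof.
elim: t => [x|w1 w2 t1 IH1 t2 IH2] /=; first by case: eqP.
move=> e; have := e => /and3P [w1p w2p]; rewrite all_cat => /andP [/IH1 e1 /IH2 e2].
case: eqP => // _; case: ifP => _ //; case: ifP => _ //.
by apply: addr_ge0; [exact: (@ld_ge0 (WNode w1 w2 t1 t2) a e) | exact: (@ld_ge0 (WNode w1 w2 t1 t2) b e)].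
Qed.

Lemma dist_gt0 t a b : all (fun w => 0 < w) (edge_weights t) -> uniq (leaves t) ->
  a \in leaves t -> b \in leaves t -> a != b -> 0 < dist t a b.
Proof.
elim: t => [x|w1 w2 t1 IH1 t2 IH2].
  by rewrite /= !inE => _ _ /eqP -> /eqP ->; rewrite eqxx.
move=> e; have e0 : all (fun w => 0 <= w) (edge_weights (WNode w1 w2 t1 t2)).
  by apply: sub_all e => x /ltW.
move: e => /= /and3P [w1p w2p]; rewrite all_cat => /andP [e1 e2].
move: e0 => /= /and3P [_ _]; rewrite all_cat => /andP [f1 f2].
move=> u; have := u; rewrite cat_uniq => /and3P [u1 _ u2].
move=> ha hb ab; rewrite (negbTE ab).
case: ifP => [/andP [a1 b1]|h1]; first exact: IH1.
case: ifP => [/andP [a2 b2]|h2]; first exact: IH2.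
have la : forall c, c \in leaves t1 ++ leaves t2 -> 0 < leaf_depth (WNode w1 w2 t1 t2) c.
  move=> c /=; rewrite mem_cat; case: ifP => c1 /=.
    by move=> _; rewrite ltr_pwDl // ld_ge0.
  by move=> c2; rewrite c2 ltr_pwDl // ld_ge0.
by rewrite addr_gt0 // la.
Qed.

Lemma dist_sub t s u a b : subtree_at t s = Some u -> uniq (leaves t) ->
  a \in leaves u -> b \in leaves u -> dist t a b = dist u a b.
Proof.
have [->|ab] := eqVneq a b; first by rewrite !dist_aa.
elim: s t => [|c s IH] t; first by case: t => [x|w1 w2 t1 t2] [<-].
case: t => [x|w1 w2 t1 t2] //=.
move=> hs un ha hb; rewrite (negbTE ab).
have [sub1 uu] := sub_leaves hs.
have := un; rewrite cat_uniq => /and3P [u1 _ u2].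
case: c hs sub1 uu => hs sub1 uu.
  have a2 := sub1 _ ha; have b2 := sub1 _ hb.
  rewrite (negbTE (uniq_notin2 un a2)) a2 b2 /=.
  exact: IH hs u2 ha hb.
by rewrite (sub1 _ ha) (sub1 _ hb) /=; apply: IH hs u1 ha hb.
Qed.

Lemma vertices_size t : (size (vertices t)).+1 = (2 * NL t)%N.
Proof.
rewrite /NL; elim: t => [x|w1 w2 t1 IH1 t2 IH2] //=.
rewrite size_cat !size_map size_cat; lia.
Qed.

Lemma vertices_sub t s : s \in vertices t -> exists u, subtree_at t s = Some u.
Proof.
elim: t s => [x|w1 w2 t1 IH1 t2 IH2] s /=.
  by rewrite inE => /eqP ->; exists (WLeaf x).
rewrite inE mem_cat => /orP [/eqP ->|/orP [/mapP [s' hs ->]|/mapP [s' hs ->]]] /=.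
- by exists (WNode w1 w2 t1 t2).
- exact: IH1.
- exact: IH2.
Qed.

End TreeL.

Section Est.
Variable n : nat.
Set Implicit Arguments. Unset Strict Implicit.

Definition tcomps (tr : triple n) : seq 'I_n := [:: (val tr).1.1; (val tr).1.2; (val tr).2].
Definition comp (tr : triple n) (k : 'I_3) : 'I_n := nth (val tr).1.1 (tcomps tr) k.
Definition Aset (x0 y0 : 'I_n) (Rt : seq 'I_n) : {set triple n} :=
  [set tr | [exists c : 'I_n, (c \in Rt) && perm_eq (tcomps tr) [:: x0; y0; c]]].

Lemma mk3 (a b c : 'I_n) : a != b -> b != c -> a != c ->
  exists tr : triple n, perm_eq (tcomps tr) [:: a; b; c].
Proof.
have P : forall x y z : 'I_n, (x < y)%N -> (y < z)%N -> perm_eq [:: x; y; z] [:: a; b; c] ->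
    exists tr : triple n, perm_eq (tcomps tr) [:: a; b; c].
  move=> x y z xy yz hp.
  by exists (exist _ ((x, y), z) (introT andP (conj xy yz))).
move=> /eqP ab /eqP bc /eqP ac.
have ab' : nat_of_ord a <> nat_of_ord b by move=> e; apply: ab; apply: val_inj.
have bc' : nat_of_ord b <> nat_of_ord c by move=> e; apply: bc; apply: val_inj.
have ac' : nat_of_ord a <> nat_of_ord c by move=> e; apply: ac; apply: val_inj.
have [h1|h1|h1] := ltngtP a b; have [h2|h2|h2] := ltngtP b c;
  have [h3|h3|h3] := ltngtP a c; try lia;
first [ by apply: (P a b c); [lia|lia|apply/permP=> p /=; lia]
      | by apply: (P a c b); [lia|lia|apply/permP=> p /=; lia]
      | by apply: (P b a c); [lia|lia|apply/permP=> p /=; lia]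
      | by apply: (P b c a); [lia|lia|apply/permP=> p /=; lia]
      | by apply: (P c a b); [lia|lia|apply/permP=> p /=; lia]
      | by apply: (P c b a); [lia|lia|apply/permP=> p /=; lia] ].
Qed.


Lemma Aset_card x0 y0 (Rt : seq 'I_n) : uniq Rt -> x0 \notin Rt -> y0 \notin Rt -> x0 != y0 ->
  (size Rt <= #|Aset x0 y0 Rt|)%N.
Proof.
move=> uR x0R y0R xy.
pose phi (tr : triple n) := let: (e0, e1, e2) := val tr in
  if e0 \in Rt then e0 else if e1 \in Rt then e1 else e2.
have key : forall tr c, c \in Rt -> perm_eq (tcomps tr) [:: x0; y0; c] -> phi tr = c.
  move=> [[[e0 e1] e2] /= H] c cR hp; rewrite /phi /=.
  have m : forall e, e \in [:: e0; e1; e2] -> e \in Rt -> e = c.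
    move=> e he eR; rewrite (perm_mem hp) !inE in he.
    case/or3P: he => /eqP ee //; subst e.
      by rewrite eR in x0R.
    by rewrite eR in y0R.
  have cin : c \in [:: e0; e1; e2] by rewrite (perm_mem hp) !inE eqxx !orbT.
  case: ifP => h0; first by apply: m => //; rewrite !inE eqxx.
  case: ifP => h1; first by apply: m => //; rewrite !inE eqxx orbT.
  move: cin; rewrite !inE => /or3P [/eqP|/eqP|/eqP] ce //; subst c.
    by rewrite cR in h0.
  by rewrite cR in h1.
rewrite -(card_uniqP uR).
apply: leq_trans (leq_imset_card phi (Aset x0 y0 Rt)).
apply: subset_leq_card; apply/subsetP => c cR.
have x0c : x0 != c by apply/eqP => e; rewrite e cR in x0R.
have y0c : y0 != c by apply/eqP => e; rewrite e cR in y0R.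
have [tr htr] := mk3 xy y0c x0c.
apply/imsetP; exists tr; last by rewrite (key _ _ cR htr).
by rewrite inE; apply/existsP; exists c; rewrite cR htr.
Qed.

End Est.

Section QP.
Variables (R : realType) (n : nat) (T : wtree R n).
Set Implicit Arguments. Unset Strict Implicit.

Lemma qprob_ge0 tr k : (forall a b, 0 <= dist T a b) -> 0 <= qprob T tr k.
Proof.
move=> d0; rewrite /qprob.
have S0 : 0 <= 2 * (dist T (val tr).1.1 (val tr).1.2 + dist T (val tr).1.2 (val tr).2 + dist T (val tr).1.1 (val tr).2).
  by rewrite mulr_ge0 // !addr_ge0.
by case: (val k) => [|[|k']]; apply: divr_ge0 => //; apply: addr_ge0.
Qed.

Lemma qsum1 tr : (forall a b, dist T a b = dist T b a) ->
  0 < dist T (val tr).1.1 (val tr).1.2 + dist T (val tr).1.2 (val tr).2 + dist T (val tr).1.1 (val tr).2 ->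
  \sum_k qprob T tr k = 1.
Proof.
move=> ds; rewrite !big_ord_recr big_ord0 /qprob /=.
case: tr => [[[a b] c] H] /= S0.
rewrite (ds b a) (ds c a) (ds c b).
move: S0; set x := dist T a b; set y := dist T b c; set z := dist T a c => S0.
have hS : 2 * (x + y + z) != 0 by rewrite mulf_neq0 // gt_eqF.
field.
by move: hS; rewrite mulf_eq0 negb_or => /andP [].
Qed.


Lemma qsum_A x0 y0 (Rt : seq 'I_n) h tr : x0 \notin Rt -> y0 \notin Rt -> 0 <= h ->
  (forall c a b, c \in Rt -> a \in [:: x0; y0; c] -> b \in [:: x0; y0; c] -> a != b ->
     dist T a b = if (a \in Rt) || (b \in Rt) then 2 else 2 * h) ->
  tr \in Aset x0 y0 Rt ->
  \sum_k qprob T tr k * ((comp tr k \in Rt) : nat)%:R = (h + 2)^-1.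
Proof.
move=> x0R y0R h0 HD; rewrite inE => /existsP [c /andP [cR hp]].
rewrite !big_ord_recr big_ord0 /qprob /comp /=.
move: hp; rewrite /tcomps; case: tr => [[[a b] d] H] /= hp.
have ma : a \in [:: x0; y0; c] by rewrite -(perm_mem hp) !inE eqxx.
have mb : b \in [:: x0; y0; c] by rewrite -(perm_mem hp) !inE eqxx orbT.
have md : d \in [:: x0; y0; c] by rewrite -(perm_mem hp) !inE eqxx !orbT.
move/andP: H => [ab bd].
have nab : a != b by apply/eqP => e; rewrite e ltnn in ab.
have nbd : b != d by apply/eqP => e; rewrite e ltnn in bd.
have nad : a != d by apply/eqP => e; move: (ltn_trans ab bd); rewrite e ltnn.
have cnt := (permP hp) (mem Rt); rewrite /= (negbTE x0R) (negbTE y0R) cR in cnt.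
rewrite (HD c b a cR mb ma) 1?eq_sym // (HD c d a cR md ma) 1?eq_sym //.
rewrite (HD c a b cR ma mb) // (HD c d b cR md mb) 1?eq_sym //.
rewrite (HD c b d cR mb md) // (HD c a d cR ma md) //.
have h2 : h + 2 != 0 by rewrite gt_eqF //; lra.
move: cnt.
case: (a \in Rt); case: (b \in Rt); case: (d \in Rt) => //= _.
all: field; rewrite h2 /= gt_eqF //; lra.
Qed.

End QP.

Lemma est_err (R : realType) (K m h t : R) : 0 < m -> 0 <= h <= 1 -> 0 <= t <= 6^-1 ->
  `|K - m * (h + 2)^-1| < m * t -> `|(K / m)^-1 - 2 - h| <= 18 * t.
Proof.
move=> m0 /andP [h0 h1] /andP [t0 t1] hK.
set p := (h + 2)^-1.
have hp : p * (h + 2) = 1 by rewrite /p mulVf // gt_eqF //; lra.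
set r := K / m.
have Kr : K = r * m by rewrite /r mulfVK // gt_eqF.
have hr : `|r - p| < t.
  by move: hK; rewrite Kr [m * p]mulrC -mulrBl normrM (gtr0_norm m0) [m * t]mulrC ltr_pM2r.
move: hr; rewrite ltr_norml => /andP [hr1 hr2].
have p13 : 3^-1 <= p.
  rewrite /p lef_pV2 ?posrE //; lra.
have r0 : 6^-1 <= r by lra.
have rpos : 0 < r by apply: lt_le_trans r0; rewrite invr_gt0.
set ri := r^-1.
have hri : r * ri = 1 by rewrite /ri mulfV // gt_eqF.
have ri6 : ri <= 6.
  rewrite /ri -[6](invrK (6:R)) lef_pV2 ?posrE ?invr_gt0 //.
have E : ri - 2 - h = ri * (h + 2) * (p - r).
  have -> : ri * (h + 2) * (p - r) = ri * (p * (h + 2)) - (h + 2) * (r * ri) by ring.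
  by rewrite hp hri; ring.
have ri0 : 0 <= ri by rewrite /ri invr_ge0 ltW.
rewrite E normrM normrM (ger0_norm ri0) (ger0_norm (_ : 0 <= h + 2)); last by lra.
have d0 := normr_ge0 (r - p).
have hrp : `|p - r| <= t by rewrite distrC ltW // ltr_norml; apply/andP; split; lra.
have H1 : ri * (h + 2) * `|p - r| <= 6 * 3 * t.
  apply: ler_pM => //; first by rewrite mulr_ge0 //; lra.
  apply: ler_pM => //; lra.
lra.
Qed.

Definition Kc (R : realType) n (Rt : seq 'I_n) (A : {set triple n}) (f : outcomes n) : R :=
  \sum_(tr in A) ((comp tr (f tr) \in Rt) : nat)%:R.

Definition hest (R : realType) n (X Y Rt : seq 'I_n) (f : outcomes n) : R :=
  match X, Y with
  | x0 :: _, y0 :: _ => (Kc R Rt (Aset x0 y0 Rt) f / #|Aset x0 y0 Rt|%:R)^-1 - 2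
  | _, _ => 0
  end.

Definition est (R : realType) n (topo : btree n) (f : outcomes n) (s : seq bool) : R :=
  match topo with
  | BNode _ Rt => match bsub topo s with
                  | Some (BNode X Y) => hest R (bleaves X) (bleaves Y) (bleaves Rt) f
                  | _ => 0
                  end
  | BLeaf _ => 0
  end.

Lemma union_bound (R : realType) (T : finType) (S : eqType) (l : seq S)
    (P : S -> T -> bool) (w : T -> R) : (forall x, 0 <= w x) ->
  \sum_(x | ~~ all (fun s => P s x) l) w x <= \sum_(s <- l) \sum_(x | ~~ P s x) w x.
Proof.
move=> w0; elim: l => [|s l IH].
  by rewrite big_nil big_pred0.
rewrite big_cons.
apply: (le_trans (@sum_le_or R T (fun x => ~~ all (fun s0 => P s0 x) (s :: l)) (fun x => ~~ P s x) (fun x => ~~ all (fun s0 => P s0 x) l) w w0 _)).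
  by move=> x /=; rewrite negb_and.
by rewrite lerD2l.
Qed.

Lemma sum_seq_le (R : realType) (S : eqType) (l : seq S) (F : S -> R) c :
  (forall s, s \in l -> F s <= c) -> \sum_(s <- l) F s <= (size l)%:R * c.
Proof.
elim: l => [|s l IH] H; first by rewrite big_nil mul0r.
rewrite big_cons /= -addn1 natrD mulrDl mul1r addrC lerD //.
  by apply: IH => x xl; apply: H; rewrite inE xl orbT.
by apply: H; rewrite mem_head.
Qed.

Lemma nat_aux (a b n : nat) : (a <= b)%N -> (a + b)%N = n -> (n <= 2 * b)%N.
Proof. by move=> ? <-; lia. Qed.

Section Valid.
Variables (R : realType) (n : nat) (T : wtree R n).
Hypothesis n2 : (2 <= n)%N.
Hypothesis hv : valid_tree 1 T.

Lemma v_uniq : uniq (leaves T).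
Proof. by case: hv => hp _ _ _; rewrite (perm_uniq hp) enum_uniq. Qed.

Lemma v_mem a : a \in leaves T.
Proof. by case: hv => hp _ _ _; rewrite (perm_mem hp) mem_enum. Qed.

Lemma v_size : size (leaves T) = n.
Proof. by case: hv => hp _ _ _; rewrite (perm_size hp) size_enum_ord. Qed.

Lemma v_pos : all (fun w => 0 < w) (edge_weights T).
Proof.
case: hv => _ _ _ he; apply: sub_all he => w /=; apply: lt_le_trans.
rewrite mul1r divr_gt0 // ?sqrtr_gt0 ?ln_gt0 // ?ltr0n ?ltr1n //; lia.
Qed.

Lemma v_ge0 : all (fun w => 0 <= w) (edge_weights T).
Proof. by apply: sub_all v_pos => x /ltW. Qed.

Lemma v_qge0 tr k : 0 <= qprob T tr k.
Proof. by apply: qprob_ge0 => a b; apply: dist_ge0 v_ge0. Qed.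

Lemma v_qsum tr : \sum_k qprob T tr k = 1.
Proof.
apply: qsum1; first exact: dist_sym.
have d0 : forall a b, 0 <= dist T a b by move=> a b; apply: dist_ge0 v_ge0.
have ne : (val tr).1.1 != (val tr).1.2.
  case: tr => [[[a b] c] /= /andP [ab _]]; apply/eqP => e; by rewrite e ltnn in ab.
have := dist_gt0 v_pos v_uniq (v_mem (val tr).1.1) (v_mem (val tr).1.2) ne.
have := d0 (val tr).1.2 (val tr).2; have := d0 (val tr).1.1 (val tr).2; lra.
Qed.

End Valid.

Lemma sum_compl (R : realType) (T : finType) (P : pred T) (w : T -> R) :
  \sum_(x | P x) w x = \sum_x w x - \sum_(x | ~~ P x) w x.
Proof. by rewrite (bigID P predT) /= addrK. Qed.

Lemma nat_aux2 (v a b n : nat) : v.+1 = (2 * a)%N -> (a + b)%N = n -> (v <= 2 * n)%N.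
Proof. by move=> e1 <-; lia. Qed.

Section Vertex.
Variables (R : realType) (n : nat) (w1 w2 : R) (t1 t2 : wtree R n).
Local Notation T := (WNode w1 w2 t1 t2).
Hypothesis n2 : (2 <= n)%N.
Hypothesis hvT : valid_tree 1 T.

Lemma x_uniq : uniq (leaves t1 ++ leaves t2).
Proof. exact: (v_uniq hvT). Qed.

Lemma x_pw : all (fun x => x == 1) (path_weights T).
Proof. by case: hvT. Qed.

Lemma rootD a c : a \in leaves t1 -> c \in leaves t2 -> dist T a c = 2.
Proof.
move=> a1 c2.
have c1 := uniq_notin2 x_uniq c2.
have a2 := uniq_notin1 x_uniq a1.
have ac : a != c by apply/eqP => e; rewrite e c2 in a2.
have E : dist T a c = leaf_depth T a + leaf_depth T c.
  by rewrite /= (negbTE ac) (negbTE c1) andbF (negbTE a2) /=.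
have la : a \in leaves T by rewrite /= mem_cat a1.
have lc : c \in leaves T by rewrite /= mem_cat c2 orbT.
by rewrite E (ld_const x_pw la) (ld_const x_pw lc).
Qed.

Lemma innerD s' v1 v2 x y a b : subtree_at t1 s' = Some (WNode v1 v2 x y) ->
  a \in leaves x -> b \in leaves y -> dist T a b = 2 * hv (WNode v1 v2 x y).
Proof.
move=> hs ax ay.
have hs' : subtree_at T (false :: s') = Some (WNode v1 v2 x y) by [].
have [sub uu] := sub_leaves hs'.
have uu' := uu x_uniq.
have la : a \in leaves (WNode v1 v2 x y) by rewrite /= mem_cat ax.
have lb : b \in leaves (WNode v1 v2 x y) by rewrite /= mem_cat ay orbT.
rewrite (dist_sub hs' x_uniq la lb).
have bx := uniq_notin2 uu' ay.
have a_y := uniq_notin1 uu' ax.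
have ab : a != b by apply/eqP => e; rewrite e ay in a_y.
have C := sub_const hs' x_pw.
have E : dist (WNode v1 v2 x y) a b = leaf_depth (WNode v1 v2 x y) a + leaf_depth (WNode v1 v2 x y) b.
  by rewrite /= (negbTE ab) (negbTE bx) andbF (negbTE a_y) /=.
by rewrite E (ld_const C la) (ld_const C lb); ring.
Qed.


Lemma vertex_bound s' (tt B : R) : s' \in vertices t1 -> 0 <= tt -> tt <= 6^-1 -> 18 * tt <= B ->
  Pr T (fun f => ~~ match subtree_at T (false :: s') with
      | Some u => `| @est R n (topology T) f (false :: s') - hv u | <= B
      | None => false end) <= 2 * expR (- ((n%:R / 2) * tt ^+ 2 / 8)).
Proof.
move=> hs' tt0 tt1 hB.
have [u hu] := vertices_sub hs'.
have hu' : subtree_at T (false :: s') = Some u by [].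
rewrite hu'.
have estE : forall f, @est R n (topology T) f (false :: s') =
   match topology u with
   | BNode X Y => @hest R n (bleaves X) (bleaves Y) (leaves t2) f
   | _ => 0 end.
  by move=> f; rewrite /est /= bsub_top hu /= bleaves_top.
have B0 : 0 <= B by lra.
have e0 : 0 <= 2 * expR (- ((n%:R / 2) * tt ^+ 2 / 8)) by rewrite mulr_ge0 ?expR_ge0.
case: u hu hu' estE => [x|v1 v2 x y] hu hu' estE.
  rewrite /Pr big_pred0 // => f; rewrite estE /= subr0 normr0 B0 //.
have Ex := bleaves_top x; have Ey := bleaves_top y.
case Ex' : (bleaves (topology x)) => [|x0 X]; first by move: (leaves_nil x); rewrite -Ex Ex'.
case Ey' : (bleaves (topology y)) => [|y0 Y]; first by move: (leaves_nil y); rewrite -Ey Ey'.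
have estE' : forall f, @est R n (topology T) f (false :: s') =
    (Kc R (leaves t2) (Aset x0 y0 (leaves t2)) f / #|Aset x0 y0 (leaves t2)|%:R)^-1 - 2.
  by move=> f; rewrite estE /= /hest Ex' Ey'.
clear estE.
have x0x : x0 \in leaves x by rewrite -Ex Ex' mem_head.
have y0y : y0 \in leaves y by rewrite -Ey Ey' mem_head.
have [subu uu] := sub_leaves hu.
have uu1 : uniq (leaves t1) by move: x_uniq; rewrite cat_uniq => /and3P [].
have uRt : uniq (leaves t2) by move: x_uniq; rewrite cat_uniq => /and3P [].
have uu' := uu uu1.
have x01 : x0 \in leaves t1 by apply: subu; rewrite /= mem_cat x0x.
have y01 : y0 \in leaves t1 by apply: subu; rewrite /= mem_cat y0y orbT.
have x0R := uniq_notin1 x_uniq x01.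
have y0R := uniq_notin1 x_uniq y01.
have xy : x0 != y0.
  by apply/eqP => e; move: (uniq_notin2 uu' y0y); rewrite -e x0x.
have cardA := Aset_card uRt x0R y0R xy.
have sizeRt : (n <= 2 * size (leaves t2))%N.
  have sz := v_size hvT; case: hvT => _ /= /andP [o _] _ _.
  rewrite /NL in o; rewrite /= size_cat in sz; exact: nat_aux o sz.
pose h := hv (WNode v1 v2 x y).
have /andP [h0 h1] : 0 <= h <= 1 := hv_bounds (v_ge0 n2 hvT) x_pw hu'.
pose A := Aset x0 y0 (leaves t2).
have mn : n%:R / 2 <= (#|A|%:R : R).
  rewrite ler_pdivrMr // -natrM ler_nat mulnC; apply: leq_trans sizeRt _.
  by rewrite leq_mul2l.
have m0 : 0 < (#|A|%:R : R).
  rewrite ltr0n; apply: leq_trans cardA; rewrite lt0n size_eq0; exact: leaves_nil.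
have HD : forall c a b, c \in leaves t2 -> a \in [:: x0; y0; c] -> b \in [:: x0; y0; c] ->
    a != b -> dist T a b = if (a \in leaves t2) || (b \in leaves t2) then 2 else 2 * h.
  move=> c a b cR; rewrite !inE.
  have x0c : x0 != c by apply/eqP => e; rewrite e cR in x0R.
  have y0c : y0 != c by apply/eqP => e; rewrite e cR in y0R.
  case/or3P => /eqP -> ; case/or3P => /eqP -> ; rewrite ?eqxx // => _.
  - by rewrite (negbTE x0R) (negbTE y0R); exact: (innerD hu x0x y0y).
  - by rewrite cR orbT; exact: rootD x01 cR.
  - by rewrite (negbTE x0R) (negbTE y0R) dist_sym; exact: (innerD hu x0x y0y).
  - by rewrite cR orbT; exact: rootD y01 cR.
  - by rewrite cR dist_sym; exact: (rootD x01 cR).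
  - by rewrite cR dist_sym; exact: (rootD y01 cR).
have hp : forall tr, tr \in A ->
    \sum_k qprob T tr k * ((comp tr k \in leaves t2) : nat)%:R = (h + 2)^-1.
  by move=> tr trA; apply: qsum_A x0R y0R h0 HD trA.
have tt2 : tt <= 2 by lra.
have ch := @chernoff2 R (triple n) 'I_3 (qprob T) (v_qge0 n2 hvT) (v_qsum n2 hvT) A
   (fun tr k => comp tr k \in leaves t2) (h + 2)^-1 tt hp tt0 tt2.
apply: le_trans (le_trans _ ch) _.
  rewrite /Pr; apply: sum_le_sub => f.
    by rewrite /outcome_prob; apply: prodr_ge0 => i _; apply: v_qge0.
  rewrite estE' => hbad; rewrite leNgt; apply/negP => hlt.
  move/negP: hbad; apply; apply: le_trans hB.
  exact: (est_err m0 (introT andP (conj h0 h1)) (introT andP (conj tt0 tt1)) hlt).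
rewrite ler_wpM2l // ler_expR lerN2.
apply: ler_wpM2r; first by rewrite invr_ge0 ler0n.
by apply: ler_wpM2r; [exact: sqr_ge0 | exact: mn].
Qed.
End Vertex.

Unset Implicit Arguments.

Theorem lemma5 (R : realType) :
  exists tau : R, 0 < tau /\
  exists est : forall n : nat, btree n -> outcomes n -> seq bool -> R,
  exists C : R, 0 < C /\
  forall eps : R, 0 < eps ->
  exists N : nat, forall n : nat, (N <= n)%N ->
  forall T : wtree R n, valid_tree tau T ->
    1 - eps <=
    Pr T (fun f : outcomes n =>
      all (fun s : seq bool =>
        match subtree_at T s with
        | Some u => `| est n (topology T) f s - hv u |
                      <= C * Num.sqrt (ln (n%:R) / n%:R)
        | None => false
        end) (lc_vertices T)).
Proof.
exists 1; split; first exact: ltr01.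
exists (@est R); exists 108; split; first by lra.
move=> eps eps0.
have [N1 hN1] : exists N : nat, 4 / eps < (N%:R : R).
  by exists (Num.Def.archi_bound (4 / eps)); apply: archi_boundP; rewrite divr_ge0 //; lra.
have [N2 hN2] : exists N : nat, 2592 ^+ 2 < (N%:R : R).
  by exists (Num.Def.archi_bound (2592 ^+ 2 : R)); apply: archi_boundP; rewrite sqr_ge0.
exists (maxn 2 (maxn N1 N2)) => n; rewrite !geq_max => /and3P [n2 hN1' hN2'] T hT.
have hn1 : 4 / eps < n%:R by apply: lt_le_trans hN1 _; rewrite ler_nat.
have hn2 : 2592 ^+ 2 < (n%:R : R) by apply: lt_le_trans hN2 _; rewrite ler_nat.
have npos : 0 < (n%:R : R) by rewrite ltr0n; lia.
pose L := ln (n%:R : R).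
have L0 : 0 < L by apply: ln_gt0; rewrite ltr1n.
pose r := Num.sqrt (n%:R : R).
have r0 : 0 <= r := sqrtr_ge0 _.
have r2 : r ^+ 2 = n%:R by rewrite sqr_sqrtr // ltW.
have rpos : 0 < r by rewrite sqrtr_gt0.
have Lr : L < 2 * r.
  rewrite /L -r2 lnXn // mulr2n.
  have := ln_sublinear rpos; lra.
have r2592 : 2592 < r by nra.
pose sq := Num.sqrt (L / n%:R).
have sq0 : 0 <= sq := sqrtr_ge0 _.
have sq2 : sq ^+ 2 = L / n%:R by rewrite sqr_sqrtr // divr_ge0 // ltW.
have Ln : L / n%:R <= 1296^-1.
  rewrite ler_pdivrMr // -r2.
  have : 1296 * L <= r ^+ 2 by nra.
  lra.
pose tt := 6 * sq.
have tt0 : 0 <= tt by rewrite /tt; lra.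
have tt1 : tt <= 6^-1.
  have : sq <= 36^-1 by nra.
  rewrite /tt; lra.
case: T hT => [x|w1 w2 t1 t2] hT.
  have e := v_size hT; simpl in e; exfalso; move: n2; rewrite -e.
  by [].
rewrite /Pr sum_compl.
have tot := @sum_wt R (triple n) 'I_3 (qprob (WNode w1 w2 t1 t2)) (v_qsum n2 hT).
rewrite /wt in tot; rewrite /outcome_prob tot lerD2l lerN2.
have w0 : forall f : outcomes n, 0 <= \prod_tr qprob (WNode w1 w2 t1 t2) tr (f tr).
  by move=> f; apply: prodr_ge0 => i _; apply: v_qge0.
apply: le_trans (union_bound _ _ w0) _.
pose c := 2 * expR (- (n%:R / 2 * tt ^+ 2 / 8)).
apply: (@le_trans _ _ ((size (lc_vertices (WNode w1 w2 t1 t2)))%:R * c)).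
  apply: sum_seq_le => s; rewrite /lc_vertices => /mapP [s' hs' ->].
  have hB : 18 * tt <= 108 * sq by rewrite /tt; lra.
  exact: (vertex_bound n2 hT hs' tt0 tt1 hB).
have hsz : ((size (lc_vertices (WNode w1 w2 t1 t2)))%:R : R) <= 2 * n%:R.
  rewrite /lc_vertices size_map.
  have vs := vertices_size t1.
  have e := v_size hT; rewrite /= size_cat in e.
  have : (size (vertices t1) <= 2 * n)%N.
    exact: nat_aux2 vs e.
  by rewrite -(ler_nat R) natrM.
have eq1 : n%:R / 2 * tt ^+ 2 / 8 = 9 / 4 * L.
  rewrite /tt exprMn sq2; field; rewrite gt_eqF //.
have ec : c <= 2 * (n%:R ^+ 2)^-1.
  rewrite /c eq1 ler_wpM2l //.
  apply: (@le_trans _ _ (expR (- (2 * L)))); first by rewrite ler_expR; lra.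
  by rewrite expRN expRM_natl lnK // posrE.
pose ni := (n%:R : R)^-1.
have hni : n%:R * ni = 1 by rewrite /ni mulfV // gt_eqF.
have ni0 : 0 < ni by rewrite /ni invr_gt0.
have c0 : 0 <= c by rewrite /c mulr_ge0 ?expR_ge0.
have ec' : c <= 2 * (ni * ni) by rewrite /ni -expr2 exprVn.
have h4 : 4 < eps * n%:R by move: hn1; rewrite ltr_pdivrMr // mulrC.
apply: (@le_trans _ _ (2 * n%:R * (2 * (ni * ni)))).
  by apply: ler_pM; [rewrite ler0n | exact: c0 | exact: hsz | exact: ec'].
have -> : 2 * n%:R * (2 * (ni * ni)) = 4 * ni * (n%:R * ni) by ring.
rewrite hni mulr1.
have : 4 * ni < eps * n%:R * ni by rewrite ltr_pM2r.
rewrite -mulrA hni mulr1; lra.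
Qed.
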